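(* Let $q\ge5$ and $\mu\in\mathbb{F}_q\setminus\{0,1\}$. Let $\ell_\mu$ be the line through $R_{\mu,0}=\mathbf{P}(0,\mu,0,1)$ and $R_{\mu,\infty}=\mathbf{P}(1,0,1,0)$, so $\ell_\mu=\{R_{\mu,\gamma}:\gamma\in\mathbb{F}_q\}\cup\{R_{\mu,\infty}\}$ with $R_{\mu,\gamma}=\mathbf{P}(\gamma,\mu,\gamma,1)$. Then: (i) $\ell_\mu$ has no point on $\mathscr{C}$; (ii) $\ell_\mu$ is not a chord of $\mathscr{C}$; (iii) $\ell_\mu$ is contained in neither $\pi_{osc}(\infty)$ nor $\pi_{osc}(0)$; more precisely $R_{\mu,\gamma}\notin\pi_{osc}(\infty)$ for all $\gamma\in\mathbb{F}_q$, $R_{\mu,\infty}\notin\pi_{osc}(0)$, and $R_{\mu,\infty}\in\pi_{osc}(\infty)$; (iv) if $R_{\mu,\infty}\notin\pi_{osc}(t)$ for all $t\in\mathbb{F}_q$, then $\ell_\mu$ is not contained in any osculating plane; (v) for $t\in\mathbb{F}_q$, $R_{\mu,\infty}\in\pi_{osc}(t)$ if and only if $3t^2+1=0$.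
   Context: Points of $\mathrm{PG}(3,q)$ are written $\mathbf{P}(x_0,x_1,x_2,x_3)$ over $\mathbb{F}_q$. For $t$ in $\mathbb{F}_q$ or $\mathbb{F}_{q^2}$ put $P(t)=\mathbf{P}(t^3,t^2,t,1)$ and $P(\infty)=\mathbf{P}(1,0,0,0)$; the twisted cubic is $\mathscr{C}=\{P(t):t\in\mathbb{F}_q\cup\{\infty\}\}$. The osculating plane $\pi_{osc}(t)$ is $x_0-3tx_1+3t^2x_2-t^3x_3=0$ for $t\in\mathbb{F}_q$ and $\pi_{osc}(\infty)$ is $x_3=0$. A chord of $\mathscr{C}$ is a real chord (line joining two distinct points of $\mathscr{C}$), a tangent (line through $P(t)$ and $\mathbf{P}(3t^2,2t,1,0)$ for $t\in\mathbb{F}_q$, or through $P(\infty)$ and $\mathbf{P}(0,1,0,0)$), or an imaginary chord (line of $\mathrm{PG}(3,q)$ joining $P(t_1),P(t_2)$ with $t_1,t_2=t_1^q\in\mathbb{F}_{q^2}\setminus\mathbb{F}_q$). *)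

(* Defs.v *)
From HB Require Import structures.
From mathcomp Require Import all_boot all_order all_algebra all_field.
Set Implicit Arguments. Unset Strict Implicit. Unset Printing Implicit Defensive.
Import GRing.Theory.
Local Open Scope ring_scope.

(* Vectors of F^4 (homogeneous coordinates of PG(3,q)) are row vectors 'rV[R]_4. *)
Definition vec4 (R : ringType) (a b c d : R) : 'rV[R]_4 :=
  \row_(i < 4) nth 0 [:: a; b; c; d] i.

Definition co (R : ringType) (x : 'rV[R]_4) (i : nat) : R := x ord0 (inord i).

(* P(t) = P(t^3,t^2,t,1), and P(infinity) = P(1,0,0,0); parameters in option R,
   None standing for infinity *)
Definition Pt (R : ringType) (t : R) : 'rV[R]_4 := vec4 (t ^+ 3) (t ^+ 2) t 1.
Definition cpt (R : ringType) (s : option R) : 'rV[R]_4 :=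
  match s with Some t => Pt t | None => vec4 1 0 0 0 end.

(* second point defining the tangent at P(s) *)
Definition tdir (R : ringType) (s : option R) : 'rV[R]_4 :=
  match s with Some t => vec4 (3 * t ^+ 2) (2 * t) 1 0 | None => vec4 0 1 0 0 end.

(* A point of PG(3,q) is a nonzero vector up to a nonzero scalar; a line (or any
   subspace) is represented by the set of nonzero vectors representing its points.
   span2 u v = the set of representatives of points of the line joining P(u),P(v). *)
Definition span2 (R : fieldType) (u v : 'rV[R]_4) (x : 'rV[R]_4) : Prop :=
  x != 0 /\ exists a b : R, x = a *: u + b *: v.

Definition same_set (R : fieldType) (A B : 'rV[R]_4 -> Prop) : Prop :=
  forall x, A x <-> B x.

Definition osc (R : ringType) (s : option R) (x : 'rV[R]_4) : Prop :=
  match s with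
  | Some t => co x 0 - 3 * t * co x 1 + 3 * t ^+ 2 * co x 2 - t ^+ 3 * co x 3 = 0
  | None => co x 3 = 0
  end.

Definition real_chord (F : fieldType) (l : 'rV[F]_4 -> Prop) : Prop :=
  exists s1 s2 : option F, s1 <> s2 /\ same_set l (span2 (cpt s1) (cpt s2)).

Definition tangent_line (F : fieldType) (l : 'rV[F]_4 -> Prop) : Prop :=
  exists s : option F, same_set l (span2 (cpt s) (tdir s)).

(* imaginary chord, relative to a quadratic extension L of F = F_q:
   the F-rational points of the L-line joining P(t1), P(t2), t2 = t1^q,
   t1 in L \ F. *)
Definition imag_chord (F : finFieldType) (L : fieldExtType F)
  (l : 'rV[F]_4 -> Prop) : Prop :=
  exists t1 : L, (forall a : F, t1 <> a%:A) /\
    same_set l (fun x => span2 (Pt t1) (Pt (t1 ^+ #|F|)) (map_mx (in_alg L) x)).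

Definition chord (F : finFieldType) (L : fieldExtType F)
  (l : 'rV[F]_4 -> Prop) : Prop :=
  real_chord l \/ tangent_line l \/ imag_chord L l.

Definition Rmu (F : fieldType) (mu gamma : F) : 'rV[F]_4 := vec4 gamma mu gamma 1.
Definition Rinf (F : fieldType) : 'rV[F]_4 := vec4 1 0 1 0.
Definition ell (F : fieldType) (mu : F) : 'rV[F]_4 -> Prop :=
  span2 (Rmu mu 0) (Rinf F).

(* Main.v *)
Require Import Defs.
From HB Require Import structures.
From mathcomp Require Import all_boot all_order all_algebra all_field.
From mathcomp Require Import ring.
Import GRing.Theory.
Set Implicit Arguments. Unset Strict Implicit.
Local Open Scope ring_scope.
Lemma vec4Z (R : ringType) (c a b d e : R) :
  c *: vec4 a b d e = vec4 (c*a) (c*b) (c*d) (c*e).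
Proof. by apply/rowP => i; rewrite !mxE; case: i => [[|[|[|[|i]]]] Hi] //=; rewrite mulr0. Qed.
Lemma vec4D (R : ringType) (a b c d a' b' c' d' : R) :
  vec4 a b c d + vec4 a' b' c' d' = vec4 (a+a') (b+b') (c+c') (d+d').
Proof. by apply/rowP => i; rewrite !mxE; case: i => [[|[|[|[|i]]]] Hi] //=; rewrite addr0. Qed.
Lemma vec40 (R : ringType) : 0 = vec4 0 0 0 (0:R).
Proof. by apply/rowP => i; rewrite !mxE; case: i => [[|[|[|[|i]]]] Hi]. Qed.
Lemma vec4_inj (R : ringType) (a b c d a' b' c' d' : R) :
  vec4 a b c d = vec4 a' b' c' d' -> [/\ a = a', b = b', c = c' & d = d'].
Proof.
move=> H.
have h := fun i : 'I_4 => congr1 (fun v : 'rV_4 => v ord0 i) H.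
have := h (inord 0); have := h (inord 1); have := h (inord 2); have := h (inord 3).
by rewrite !mxE !inordK.
Qed.
Lemma map_vec4 (R S : ringType) (f : R -> S) (a b c d : R) :
  map_mx f (vec4 a b c d) = vec4 (f a) (f b) (f c) (f d).
Proof. by apply/rowP => i; rewrite !mxE; case: i => [[|[|[|[|i]]]] Hi]. Qed.
Lemma co_vec4 (R : ringType) (a b c d : R) :
  [/\ co (vec4 a b c d) 0 = a, co (vec4 a b c d) 1 = b,
      co (vec4 a b c d) 2 = c & co (vec4 a b c d) 3 = d].
Proof. by rewrite /co !mxE !inordK. Qed.
Lemma vec4_neq0 (R : ringType) (a b c d : R) :
  (a != 0) || (b != 0) || (c != 0) || (d != 0) -> vec4 a b c d != 0.
Proof.
move=> H; apply/eqP; rewrite vec40 => /vec4_inj [ha hb hc hd].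
by move: H; rewrite ha hb hc hd eqxx.
Qed.

Lemma ell_cpt (F : fieldType) (mu : F) : mu != 0 -> mu != 1 ->
  forall s : option F, ~ ell mu (cpt s).
Proof.
move=> h0 h1 [t|] [_ [a [b]]]; rewrite /Rmu /Rinf /Pt !vec4Z vec4D => /vec4_inj;
  rewrite !(mulr0, mulr1, addr0, add0r); case=> e1 e2 e3 e4.
- rewrite -e3 in e1; rewrite -e4 in e2.
  have : t * (t - 1) * (t + 1) = 0.
    by rewrite (_ : t * (t - 1) * (t + 1) = t ^+ 3 - t); [rewrite e1 subrr | ring].
  move/eqP; rewrite !mulf_eq0 => /orP [/orP [/eqP ht| ] | ].
  + by move: h0; rewrite -[mu]mul1r -e2 ht expr0n eqxx.
  + rewrite subr_eq0 => /eqP ht. by move: h1; rewrite -[mu]mul1r -e2 ht expr1n eqxx.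
  + rewrite addr_eq0 => /eqP ht. by move: h1; rewrite -[mu]mul1r -e2 ht sqrrN expr1n eqxx.
- by move: e1; rewrite -e3 => /eqP; rewrite oner_eq0.
Qed.

Lemma span2_self (F : fieldType) (u v : 'rV[F]_4) : u != 0 -> span2 u v u.
Proof. by move=> h; split=> //; exists 1, 0; rewrite scale1r scale0r addr0. Qed.

Lemma cpt_neq0 (F : fieldType) (s : option F) : cpt s != 0.
Proof. by case: s => [t|]; apply: vec4_neq0; rewrite oner_eq0 ?orbT. Qed.

Lemma ell_Rinf (F : fieldType) (mu : F) : ell mu (Rinf F).
Proof.
split; first by apply: vec4_neq0; rewrite oner_eq0.
by exists 0, 1; rewrite scale0r add0r scale1r.
Qed.

Lemma ell_R0 (F : fieldType) (mu : F) : ell mu (Rmu mu 0).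
Proof.
split; first by apply: vec4_neq0; rewrite oner_eq0 !orbT.
by exists 1, 0; rewrite scale0r addr0 scale1r.
Qed.

Lemma not_imag (F : finFieldType) (L : fieldExtType F) (mu : F) :
  ~ imag_chord L (ell mu).
Proof.
case=> t1 [ht H].
move: (@ell_Rinf F mu) => /H [_ [a [b]]].
move: (t1 ^+ #|F|) => t2.
rewrite /Rinf map_vec4 /Pt !vec4Z vec4D => /vec4_inj /=.
rewrite ?scale1r ?scale0r !mulr1; case=> e1 e2 e3 e4.
have hb : b = -a by apply/eqP; rewrite -addr_eq0 addrC -e4.
rewrite hb in e1 e2 e3.
have s : t1 + t2 = 0.
  by rewrite -[t1+t2]mulr1 e3 e2; ring.
have ht2 : t2 = -t1 by apply/eqP; rewrite -addr_eq0 addrC s.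
rewrite ht2 in e1 e3.
have sq : t1 ^+ 2 = 1.
  by rewrite [RHS]e1 -[t1 ^+ 2]mulr1 e3; ring.
have : (t1 - 1) * (t1 + 1) = 0.
  have -> : (t1 - 1) * (t1 + 1) = t1 ^+ 2 - 1 by ring.
  by rewrite sq subrr.
move/eqP; rewrite mulf_eq0 => /orP [|].
- rewrite subr_eq0 => /eqP h1; apply: (ht 1); by rewrite scale1r.
- rewrite addr_eq0 => /eqP h1; apply: (ht (-1)); by rewrite scaleN1r.
Qed.

Theorem lemma4p2 (F : finFieldType) (L : fieldExtType F)
  (hL : \dim {:L} = 2%N) (hq : (5 <= #|F|)%N) (mu : F)
  (hmu0 : mu != 0) (hmu1 : mu != 1) :
  (* description of l_mu *)
  same_set (ell mu)
    (fun x => x != 0 /\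
       ((exists (gamma c : F), x = c *: Rmu mu gamma) \/ exists c : F, x = c *: Rinf F))
  (* (i) *)
  /\ (forall s : option F, ~ ell mu (cpt s))
  (* (ii) *)
  /\ ~ chord L (ell mu)
  (* (iii) *)
  /\ ~ (forall x, ell mu x -> osc None x)
  /\ ~ (forall x, ell mu x -> osc (Some 0) x)
  /\ (forall gamma : F, ~ osc None (Rmu mu gamma))
  /\ ~ osc (Some 0) (Rinf F)
  /\ osc None (Rinf F)
  (* (iv) *)
  /\ ((forall t : F, ~ osc (Some t) (Rinf F)) ->
        forall s : option F, ~ (forall x, ell mu x -> osc s x))
  (* (v) *)
  /\ (forall t : F, osc (Some t) (Rinf F) <-> 3 * t ^+ 2 + 1 = 0).
Proof.
have oscR0 : ~ osc None (Rmu mu 0).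
  by rewrite /osc /Rmu; case: (co_vec4 0 mu 0 1) => _ _ _ -> /eqP; rewrite oner_eq0.
have oscRinf : forall t : F, osc (Some t) (Rinf F) <-> 3 * t ^+ 2 + 1 = 0.
  move=> t; rewrite /osc /Rinf; case: (co_vec4 1 0 1 (0:F)) => -> -> -> ->.
  by have -> : 1 - 3 * t * 0 + 3 * t ^+ 2 * 1 - t ^+ 3 * 0 = 3 * t ^+ 2 + 1 by ring.
have oscRinf0 : ~ osc (Some 0) (Rinf F).
  by move/oscRinf; rewrite expr0n /= mulr0 add0r => /eqP; rewrite oner_eq0.
split.
  move=> x; split.
  - case=> hx [a [b hxe]]; split=> //; rewrite hxe /Rmu /Rinf.
    case: (eqVneq a 0) => [->|ha].
    + by right; exists b; rewrite scale0r add0r.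
    + left; exists (b / a), a; rewrite !vec4Z vec4D; by congr vec4; field.
  - case=> hx [[g [c hxe]]|[c hxe]]; split=> //; rewrite hxe; [exists c, (c * g) | exists 0, c];
      rewrite /Rmu /Rinf !vec4Z vec4D; congr vec4; ring.
split; first exact: (@ell_cpt F mu).
split.
  case=> [[s1 [s2 [_ H]]] | [[s H] | Hi]].
  - by apply: (@ell_cpt F mu hmu0 hmu1 s1); apply/H; apply: span2_self; apply: cpt_neq0.
  - by apply: (@ell_cpt F mu hmu0 hmu1 s); apply/H; apply: span2_self; apply: cpt_neq0.
  - exact: (@not_imag F L mu Hi).
split; first by move/(_ _ (@ell_R0 F mu)).
split; first by move/(_ _ (@ell_Rinf F mu)).
split.
  by move=> g; rewrite /osc /Rmu; case: (co_vec4 g mu g 1) => _ _ _ -> /eqP; rewrite oner_eq0.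
split; first exact: oscRinf0.
split; first by rewrite /osc /Rinf; case: (co_vec4 1 0 1 (0:F)) => _ _ _ ->.
split; last exact: oscRinf.
move=> h [t|].
- by move/(_ _ (@ell_Rinf F mu)); apply: h.
- by move/(_ _ (@ell_R0 F mu)).
Qed.
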